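(* For every integer $n\ge1$ and every $\lambda<0$, $$G_{n,n+1}(\lambda):=\frac{\frac{d}{d\lambda}h^{(1)}_{n+1}(-i\lambda)}{h^{(1)}_{n+1}(-i\lambda)}-\frac{\frac{d}{d\lambda}h^{(1)}_{n}(-i\lambda)}{h^{(1)}_{n}(-i\lambda)}>0.$$
   Context: For $n\ge0$ let $R_n(w)=\sum_{m=0}^n\frac{(n+m)!}{m!\,(n-m)!}w^m$. The spherical Hankel function of the first kind satisfies, for real $\lambda<0$, $h^{(1)}_n(-i\lambda)=(-i)^n\frac{e^{\lambda}}{\lambda}R_n\!\left(-\frac{1}{2\lambda}\right)$ (up to an $n$-independent normalizing constant, which does not affect the logarithmic derivatives); $\frac{d}{d\lambda}h^{(1)}_n(-i\lambda)$ denotes the derivative of the function $\lambda\mapsto h^{(1)}_n(-i\lambda)$. *)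

(* Defs.v *)
From Stdlib Require Import Arith Reals Lra Lia.
Open Scope R_scope.

Definition Rpoly (n : nat) (w : R) : R :=
  sum_f_R0 (fun m => INR (fact (n + m)) / (INR (fact m) * INR (fact (n - m))) * w ^ m) n.

(* Real part of the representation h^{(1)}_n(-i lam) = (-i)^n * e^lam/lam * R_n(-1/(2 lam)):
   hreal n lam := e^lam/lam * R_n(-1/(2 lam)).  The factor (-i)^n (and any normalizing
   constant) is independent of lam, so h'/h = hreal'/hreal exactly. *)
Definition hreal (n : nat) (lam : R) : R :=
  exp lam / lam * Rpoly n (- / (2 * lam)).

(* Main.v *)
Require Import Defs.
From Stdlib Require Import Reals Lra Lia Arith.
From Coquelicot Require Import Coquelicot.
Open Scope R_scope.

Definition cf (n m : nat) : R := INR (fact (n + m)) / (INR (fact m) * INR (fact (n - m))).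
Definition A (n m : nat) : R := if le_dec m n then cf n m else 0.

Lemma factS k : INR (fact (S k)) = (INR k + 1) * INR (fact k).
Proof. replace (fact (S k)) with (S k * fact k)%nat by reflexivity. rewrite mult_INR, S_INR. reflexivity. Qed.

Lemma A_rec n i : A (S (S n)) (S i) = A n (S i) + 2*(2*INR n+3) * A (S n) i.
Proof.
  unfold A.
  destruct (le_dec (S i) n) as [H1|H1].
  - destruct (le_dec (S i) (S (S n))); [|lia].
    destruct (le_dec i (S n)); [|lia].
    destruct (Nat.le_exists_sub (S i) n H1) as [j [Hj _]]. subst n.
    unfold cf.
    replace (S (S (j + S i)) + S i)%nat with (S (S (S (S (i+i+j)))))%nat by lia.
    replace (j + S i + S i)%nat with (S (S (i+i+j)))%nat by lia.
    replace (S (j + S i) + i)%nat with (S (S (i+i+j)))%nat by lia.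
    replace (S (S (j + S i)) - S i)%nat with (S (S j)) by lia.
    replace (j + S i - S i)%nat with j by lia.
    replace (S (j + S i) - i)%nat with (S (S j)) by lia.
    rewrite !factS; repeat rewrite ?plus_INR, ?S_INR.
    pose proof (INR_fact_neq_0 i). pose proof (INR_fact_neq_0 j).
    pose proof (INR_fact_neq_0 (i+i+j)). pose proof (pos_INR i). pose proof (pos_INR j).
    field. repeat split; lra.
  - destruct (le_dec (S i) (S (S n))) as [H2|H2].
    + destruct (le_dec i (S n)); [|lia].
      assert (i = n \/ i = S n) as [->| ->] by lia.
      * unfold cf.
        replace (S (S n) + S n)%nat with (S (S (S (n+n))))%nat by lia.
        replace (S n + n)%nat with (S (n+n))%nat by lia.
        replace (S (S n) - S n)%nat with 1%nat by lia.
        replace (S n - n)%nat with 1%nat by lia.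
        rewrite !factS; repeat rewrite ?plus_INR, ?S_INR.
        change (INR (fact 0)) with 1. change (INR 0) with 0.
        pose proof (INR_fact_neq_0 n). pose proof (INR_fact_neq_0 (n+n)). pose proof (pos_INR n).
        field. repeat split; lra.
      * unfold cf.
        replace (S (S n) + S (S n))%nat with (S (S (S (S (n+n)))))%nat by lia.
        replace (S n + S n)%nat with (S (S (n+n)))%nat by lia.
        replace (S (S n) - S (S n))%nat with 0%nat by lia.
        replace (S n - S n)%nat with 0%nat by lia.
        rewrite !factS; repeat rewrite ?plus_INR, ?S_INR.
        change (INR (fact 0)) with 1.
        pose proof (INR_fact_neq_0 n). pose proof (INR_fact_neq_0 (n+n)). pose proof (pos_INR n).
        field. repeat split; lra.
    + destruct (le_dec i (S n)); [lia|]. ring.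
Qed.

Lemma A0 n : A n 0 = 1.
Proof. unfold A, cf. destruct (le_dec 0 n); [|lia]. rewrite Nat.add_0_r, Nat.sub_0_r.
  change (INR (fact 0)) with 1. field. apply INR_fact_neq_0. Qed.

Lemma Rpoly_A n w : Rpoly n w = sum_f_R0 (fun m => A n m * w ^ m) n.
Proof. unfold Rpoly. apply sum_eq. intros i Hi. unfold A. destruct (le_dec i n); [reflexivity|lia]. Qed.

Lemma A_ext n k w : sum_f_R0 (fun m => A n m * w ^ m) (n + k) = sum_f_R0 (fun m => A n m * w ^ m) n.
Proof. induction k.
  - rewrite Nat.add_0_r. reflexivity.
  - replace (n + S k)%nat with (S (n + k)) by lia. simpl sum_f_R0 at 1. rewrite IHk.
    unfold A at 2. destruct (le_dec (S (n+k)) n); [lia|]. ring.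
Qed.

Lemma Rpoly_rec n w : Rpoly (S (S n)) w = Rpoly n w + 2*(2*INR n+3)*w*Rpoly (S n) w.
Proof.
  rewrite !Rpoly_A.
  rewrite <- (A_ext n 2).
  rewrite (decomp_sum _ (S (S n))) by lia.
  rewrite (decomp_sum _ (n + 2)) by lia.
  replace (pred (n+2)) with (S n) by lia. simpl pred.
  rewrite !A0.
  rewrite scal_sum.
  rewrite (sum_eq (fun i => A (S (S n)) (S i) * w ^ S i)
     (fun i => A n (S i) * w ^ S i + A (S n) i * w ^ i * (2*(2*INR n+3)*w))).
  - rewrite plus_sum. ring.
  - intros i _. rewrite A_rec. simpl pow. ring.
Qed.

Lemma Rpoly0 w : Rpoly 0 w = 1.
Proof. rewrite Rpoly_A. simpl. rewrite A0. ring. Qed.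

Lemma Rpoly1 w : Rpoly 1 w = 1 + 2 * w.
Proof. rewrite Rpoly_A. simpl. rewrite A0. unfold A, cf. destruct (le_dec 1 1); [|lia]. simpl. field. Qed.

Lemma key w : 0 < w -> forall n : nat,
  let a := Rpoly n w in let b := Rpoly (S n) w in
  0 < a /\ a <= b /\ 0 < a*a + 2*(INR n+1)*(2*w)*a*b - b*b /\
  a*a + 2*(INR n+1)*(2*w)*a*b - b*b <= (2*INR n+1)*(2*w)*(2*w)*a*a.
Proof.
  intros Hw n. induction n as [|n IH]; cbv zeta in *.
  - rewrite Rpoly0, Rpoly1. change (INR 0) with 0. split; [lra|]. split; [lra|]. split; nra.
  - rewrite Rpoly_rec. destruct IH as [Ha [Hab [HD HD2]]].
    set (a := Rpoly n w) in *. set (b := Rpoly (S n) w) in *.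
    rewrite S_INR. pose proof (pos_INR n) as Hn.
    assert (Hb : 0 < b) by lra.
    assert (Hc : b <= a + 2 * (2 * INR n + 3) * w * b).
    { destruct (Rle_dec b a) as [Hle|Hlt]. { assert (0 < 2 * (2 * INR n + 3) * w * b). { repeat apply Rmult_lt_0_compat; lra. } lra. }
      apply Rnot_le_lt in Hlt.
      assert (Hx: (b - a) * (b + a) < 2 * (INR n + 1) * (2*w) * a * b) by nra.
      assert (Hy: 2 * (INR n + 1) * (2*w) * a * b <= 2 * (2 * INR n + 3) * w * b * (b + a)).
      { assert (0 <= w * b * a) by (apply Rmult_le_pos; [apply Rmult_le_pos|]; lra).
        assert (0 <= w * b * b) by (apply Rmult_le_pos; [apply Rmult_le_pos|]; lra). nra. }
      assert (Hz: (b - a) * (b + a) < 2 * (2 * INR n + 3) * w * b * (b + a)) by lra.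
      assert (b - a < 2 * (2 * INR n + 3) * w * b).
      { apply (Rmult_lt_reg_r (b + a)); [lra|]. lra. }
      lra. }
    set (c := a + 2 * (2 * INR n + 3) * w * b) in *.
    assert (HE : b * b + 2 * (INR n + 1 + 1) * (2 * w) * b * c - c * c =
                 (2*INR n + 3)*(2*w)*(2*w)*b*b - (a*a + 2*(INR n+1)*(2*w)*a*b - b*b)) by (unfold c; ring).
    rewrite HE.
    assert (Hm : (2*INR n+1)*(2*w)*(2*w)*a*a < (2*INR n + 3)*(2*w)*(2*w)*b*b).
    { assert (0 < (2*w)*(2*w)) by nra.
      assert (a*a <= b*b) by nra.
      assert (0 < (2*w)*(2*w)*(b*b)) by (apply Rmult_lt_0_compat; [lra|apply Rmult_lt_0_compat; lra]).
      assert ((2*INR n+1)*((2*w)*(2*w)*(a*a)) <= (2*INR n+1)*((2*w)*(2*w)*(b*b))).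
      { apply Rmult_le_compat_l; [lra|]. apply Rmult_le_compat_l; lra. }
      nra. }
    assert (HQ : (2 * (INR n + 1) + 1) * (2 * w) * (2 * w) * b * b = (2*INR n + 3)*(2*w)*(2*w)*b*b) by ring.
    split; [lra|]. split. lra. split; [lra|]. lra.
Qed.

Lemma hrec n t : t <> 0 -> hreal (S (S n)) t = hreal n t - (2*INR n+3) * (/ t * hreal (S n) t).
Proof. intros Ht. unfold hreal. rewrite Rpoly_rec. field. auto. Qed.

Lemma loc_neg lam : lam < 0 -> locally lam (fun t => t < 0).
Proof. intros H. assert (Hp : 0 < - lam) by lra. exists (mkposreal _ Hp). intros t Ht.
  unfold ball in Ht; simpl in Ht. unfold AbsRing_ball, abs, minus, plus, opp in Ht; simpl in Ht.
  apply Rabs_def2 in Ht. lra. Qed.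

Lemma deriv_h : forall n lam, lam < 0 ->
  is_derive (hreal n) lam (hreal (S n) lam + INR n / lam * hreal n lam) /\
  is_derive (hreal (S n)) lam (hreal (S (S n)) lam + INR (S n) / lam * hreal (S n) lam).
Proof.
  induction n as [|n IH]; intros lam Hl.
  - split.
    + assert (E : forall t, exp t / t = hreal 0 t).
      { intros t. unfold hreal. rewrite Rpoly0. ring. }
      apply (is_derive_ext (K:=R_AbsRing) _ _ _ _ E).
      auto_derive; [lra|]. unfold hreal. rewrite Rpoly0, Rpoly1. change (INR 0) with 0. field. lra.
    + assert (E : forall t, exp t / t * (1 + 2 * (- / (2 * t))) = hreal 1 t).
      { intros t. unfold hreal. rewrite Rpoly1. ring. }
      apply (is_derive_ext (K:=R_AbsRing) _ _ _ _ E).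
      auto_derive; [lra|]. rewrite hrec by lra. unfold hreal. rewrite Rpoly0, Rpoly1.
      change (INR 0) with 0. change (INR 1) with 1. field. lra.
  - destruct (IH lam Hl) as [H0 H1]. split; [exact H1|].
    assert (Hinv : is_derive (fun t => / t) lam (- 1 / lam ^ 2)).
    { apply (is_derive_inv (fun t => t) lam 1). apply (is_derive_id (K:=R_AbsRing)). lra. }
    pose proof (is_derive_mult (fun t => / t) (hreal (S n)) lam _ _ Hinv H1 Rmult_comm) as Hm.
    pose proof (is_derive_scal _ lam (2*INR n+3) _ Hm) as Hs.
    pose proof (is_derive_minus _ _ lam _ _ H0 Hs) as Hd.
    match type of Hd with is_derive _ _ ?D =>
      replace (hreal (S (S (S n))) lam + INR (S (S n)) / lam * hreal (S (S n)) lam) with D end.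
    + refine (is_derive_ext_loc _ _ lam _ _ Hd).
      apply filter_imp with (2 := loc_neg lam Hl). intros t Ht.
      rewrite hrec by lra. reflexivity.
    + rewrite (hrec (S n)) by lra. rewrite (hrec n) by lra. rewrite !S_INR.
      unfold minus, mult, plus, opp, scal; simpl. unfold mult; simpl. field. lra.
Qed.

Theorem proposition3p1 :
  forall (n : nat) (lam : R), (1 <= n)%nat -> lam < 0 ->
  exists d1 d0 : R,
    derivable_pt_lim (hreal (S n)) lam d1 /\
    derivable_pt_lim (hreal n) lam d0 /\
    d1 / hreal (S n) lam - d0 / hreal n lam > 0.
Proof.
  intros n lam _ Hl.
  destruct (deriv_h n lam Hl) as [H0 H1].
  eexists; eexists; split; [apply is_derive_Reals; exact H1|].
  split; [apply is_derive_Reals; exact H0|].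
  rewrite hrec by lra. rewrite S_INR. unfold hreal.
  set (w := - / (2 * lam)).
  assert (Hw : 0 < w). { unfold w. apply Ropp_0_gt_lt_contravar. apply Rinv_lt_0_compat. lra. }
  destruct (key w Hw n) as [Ha [Hab [HD _]]].
  set (a := Rpoly n w) in *. set (b := Rpoly (S n) w) in *.
  assert (He : exp lam <> 0) by (pose proof (exp_pos lam); lra).
  match goal with |- ?X > 0 => replace X with ((a*a + 2*(INR n+1)*(2*w)*a*b - b*b) / (a*b)) end.
  - apply Rdiv_lt_0_compat; [lra|]. apply Rmult_lt_0_compat; lra.
  - unfold w. field. repeat split; lra.
Qed.
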